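(* For every $n\ge0$, $Inn_l(Q_n)=Inn_r(Q_n)$, and $Inn(Q_n)=\langle T_x,\ L_{x,y}\mid x,y\in Q_n\rangle$.
   Context: Cayley--Dickson loops: $Q_0=\{1,-1\}\subset\mathbb{R}$ with conjugation $x^*=x$. For $n\ge1$, $Q_n=\{(x,0),(x,1)\mid x\in Q_{n-1}\}$ with multiplication $(x,0)(y,0)=(xy,0)$, $(x,0)(y,1)=(yx,1)$, $(x,1)(y,0)=(xy^*,1)$, $(x,1)(y,1)=(-y^*x,0)$ and conjugation $(x,0)^*=(x^*,0)$, $(x,1)^*=(-x,1)$, where $-(x,a)=(-x,a)$. $Q_n$ is a loop with neutral element $1=(1,0,\dots,0)$. For a loop $Q$: $L_x(a)=xa$, $R_x(a)=ax$, $T_x=L_x^{-1}R_x$, $L_{x,y}=L_{yx}^{-1}L_yL_x$, $R_{x,y}=R_{xy}^{-1}R_yR_x$; $Mlt(Q)=\langle L_x,R_x\rangle$, $Mlt_l(Q)=\langle L_x\rangle$, $Mlt_r(Q)=\langle R_x\rangle$, and $Inn(Q)$, $Inn_l(Q)$, $Inn_r(Q)$ are the stabilizers of $1$ in these groups respectively. *)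

(* Defs.v *)
From HB Require Import structures.
From mathcomp Require Import all_boot all_order all_fingroup.
Set Implicit Arguments. Unset Strict Implicit. Unset Printing Implicit Defensive.

(* Raw representation of an element of Q_n: (s, [:: a_n; ...; a_1]) where the
   sign s is true for -1, and a_n is the outermost Cayley--Dickson bit, i.e.
   (x, a_n) with x = (s, [:: a_(n-1); ...; a_1]) in Q_(n-1). *)
Definition raw := (bool * seq bool)%type.

(* conjugation: (x,0)^* = (x^*,0), (x,1)^* = (-x,1), and x^* = x in Q_0 *)
Fixpoint cconj (s : bool) (u : seq bool) : raw :=
  match u with
  | [::] => (s, [::])
  | false :: u' => let r := cconj s u' in (r.1, false :: r.2)
  | true :: u' => (~~ s, true :: u')
  end.

Definition rconj (x : raw) : raw := cconj x.1 x.2.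
Definition rtail (x : raw) : raw := (x.1, behead x.2).
Definition rbit (x : raw) : bool := head false x.2.

Fixpoint cmul (n : nat) (x y : raw) : raw :=
  match n with
  | 0 => (addb x.1 y.1, [::])
  | n'.+1 =>
    let x' := rtail x in let y' := rtail y in
    match rbit x, rbit y with
    | false, false => let r := cmul n' x' y' in (r.1, false :: r.2)
    | false, true  => let r := cmul n' y' x' in (r.1, true :: r.2)
    | true,  false => let r := cmul n' x' (rconj y') in (r.1, true :: r.2)
    | true,  true  => let r := cmul n' (rconj y') x' in (~~ r.1, false :: r.2)
    end
  end.

Definition Q (n : nat) : finType := (bool * n.-tuple bool)%type.

Definition qmul (n : nat) (x y : Q n) : Q n :=
  let r := cmul n (x.1, val x.2) (y.1, val y.2) in
  (r.1, [tuple nth false r.2 i | i < n]).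

Definition qone (n : nat) : Q n := (false, [tuple false | i < n]).

(* The left / right translations, as permutations of Q n.  Since Q n is a
   loop they are bijections, so the picked permutation is exactly L_x (resp.
   R_x); the default 1 is never used. *)
Definition Lp (n : nat) (x : Q n) : {perm Q n} :=
  odflt 1%g [pick p : {perm Q n} | [forall a, p a == qmul x a]].
Definition Rp (n : nat) (x : Q n) : {perm Q n} :=
  odflt 1%g [pick p : {perm Q n} | [forall a, p a == qmul a x]].

Local Open Scope group_scope.

(* NB: in mathcomp, (p * q) a = q (p a) (p is applied first). *)
(* T_x = L_x^{-1} R_x *)
Definition Tp (n : nat) (x : Q n) : {perm Q n} := Rp x * (Lp x)^-1.
(* L_{x,y} = L_{yx}^{-1} L_y L_x *)
Definition Lxy (n : nat) (x y : Q n) : {perm Q n} :=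
  Lp x * Lp y * (Lp (qmul y x))^-1.
(* R_{x,y} = R_{xy}^{-1} R_y R_x *)
Definition Rxy (n : nat) (x y : Q n) : {perm Q n} :=
  Rp x * Rp y * (Rp (qmul x y))^-1.

Definition Mlt (n : nat) : {set {perm Q n}} :=
  <<[set Lp x | x : Q n] :|: [set Rp x | x : Q n]>>.
Definition Mlt_l (n : nat) : {set {perm Q n}} := <<[set Lp x | x : Q n]>>.
Definition Mlt_r (n : nat) : {set {perm Q n}} := <<[set Rp x | x : Q n]>>.

Definition Inn (n : nat) : {set {perm Q n}} := [set p in Mlt n | p (qone n) == qone n].
Definition Inn_l (n : nat) : {set {perm Q n}} := [set p in Mlt_l n | p (qone n) == qone n].
Definition Inn_r (n : nat) : {set {perm Q n}} := [set p in Mlt_r n | p (qone n) == qone n].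

(* Main.v *)
Require Import Defs.
From mathcomp Require Import all_boot all_order all_fingroup.
Set Implicit Arguments. Unset Strict Implicit. Unset Printing Implicit Defensive.


Definition cs (u : seq bool) : bool := (cconj false u).1.

Ltac bb := repeat match goal with
  | |- context [(cmul ?a ?b ?c).1] => destruct ((cmul a b c).1)
  | |- context [cs ?u] => destruct (cs u)
  | |- context [cs ?u] => destruct (cs u)
  | b : bool |- _ => destruct b
  end; try reflexivity; try discriminate.

Lemma cconjE s u : cconj s u = (addb s (cs u), u).
Proof.
rewrite /cs; elim: u s => [|[] u IH] s /=; first by rewrite addbF.
- by rewrite addbT.
- by rewrite !(IH s) (IH false).
Qed.

Lemma rconjE s u : rconj (s, u) = (addb s (cs u), u).
Proof. exact: cconjE. Qed.

Lemma cmul_sign n s u t v :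
  (cmul n (s, u) (t, v)).1 = addb (addb s t) (cmul n (false, u) (false, v)).1.
Proof.
elim: n s u t v => [|n IH] s u t v /=; first by rewrite addbF.
rewrite /rbit /rtail /=.
case: (head false u); case: (head false v) => /=; rewrite ?rconjE.
- by rewrite (IH (t (+) _)) (IH (false (+) _)); bb.
- by rewrite (IH s) (IH false _ (false (+) _)); bb.
- by rewrite (IH t) (IH false); bb.
- by rewrite (IH s); bb.
Qed.

Definition xorl (u v : seq bool) : seq bool := [seq addb p.1 p.2 | p <- zip u v].

Lemma xorl_cons a u b v : xorl (a :: u) (b :: v) = addb a b :: xorl u v.
Proof. by []. Qed.

Lemma xorlC u v : xorl u v = xorl v u.
Proof. elim: u v => [|a u IH] [|b v] //=. by rewrite !xorl_cons addbC IH. Qed.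

Lemma xorlA u v w : xorl (xorl u v) w = xorl u (xorl v w).
Proof. elim: u v w => [|a u IH] [|b v] [|c w] //=. by rewrite !xorl_cons addbA IH. Qed.

Lemma size_xorl u v : size (xorl u v) = minn (size u) (size v).
Proof. by rewrite size_map size_zip. Qed.

Lemma xorlK u v : size u = size v -> xorl u (xorl u v) = v.
Proof.
elim: u v => [|a u IH] [|b v] //= [] H. by rewrite !xorl_cons addKb IH.
Qed.

Lemma cmul_bits n s u t v : size u = n -> size v = n ->
  (cmul n (s, u) (t, v)).2 = xorl u v.
Proof.
elim: n s u t v => [|n IH] s [|a u] t [|b v] //= [Hu] [Hv].
rewrite /rbit /rtail /=.
case: a; case: b => /=; rewrite ?rconjE xorl_cons.
- by rewrite IH // xorlC.
- by rewrite IH.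
- by rewrite IH // xorlC.
- by rewrite IH.
Qed.

Lemma cmul_swap n u v : size u = n -> size v = n ->
  addb (cmul n (false, u) (false, v)).1 (cs (xorl u v)) =
  addb (addb (cs u) (cs v)) (cmul n (false, v) (false, u)).1.
Proof.
elim: n u v => [|n IH] [|a u] [|b v] //= [Hu] [Hv].
rewrite /rbit /rtail /= /cs /= -!/(cs _).
have IH1 := IH u v Hu Hv. have IH2 := IH v u Hv Hu.
rewrite xorlC in IH2.
case: a; case: b => /=; rewrite ?rconjE /= -/(xorl u v).
- rewrite (cmul_sign n (cs v)) (cmul_sign n (cs u)).
  move: IH2; bb.
- rewrite (cmul_sign n false u (cs v)); bb.
- rewrite (cmul_sign n false v (cs u)); bb.
- exact: IH1.
Qed.

Lemma cs_zero u : all negb u -> cs u = false.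
Proof. by elim: u => [|[] u IH] //= /IH. Qed.

Lemma cmul_zero n u v : all negb u ->
  (cmul n (false, u) (false, v)).1 = false /\ (cmul n (false, v) (false, u)).1 = false.
Proof.
elim: n u v => [|n IH] u v //= Hu.
rewrite /rbit /rtail /=.
have [Hh Hb] : head false u = false /\ all negb (behead u).
  by case: u Hu => //= a u /andP[/negbTE -> ->].
rewrite Hh; case: (head false v) => /=; have [I1 I2] := IH _ (behead v) Hb.
- by rewrite I2 rconjE cmul_sign cs_zero // I2.
- by rewrite I1 I2.
Qed.


Section QL.
Variable n : nat.
Definition sgQ (u v : n.-tuple bool) := (cmul n (false, val u) (false, val v)).1.
Definition txor (u v : n.-tuple bool) : n.-tuple bool := [tuple nth false (xorl u v) i | i < n].

Arguments txor : simpl never.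
Arguments sgQ : simpl never.
Lemma val_txor u v : val (txor u v) = xorl u v.
Proof.
apply: (@eq_from_nth _ false); first by rewrite size_tuple size_xorl !size_tuple minnn.
move=> i; rewrite size_tuple => Hi.
by rewrite -[i]/(nat_of_ord (Ordinal Hi)) nth_mktuple.
Qed.

Lemma qmulE (x y : Q n) : qmul x y = (addb (addb x.1 y.1) (sgQ x.2 y.2), txor x.2 y.2).
Proof.
rewrite /qmul /= cmul_sign cmul_bits ?size_tuple //.
Qed.

Lemma txorC u v : txor u v = txor v u.
Proof. by apply: val_inj; rewrite !val_txor xorlC. Qed.
Lemma txorA u v w : txor (txor u v) w = txor u (txor v w).
Proof. by apply: val_inj; rewrite !val_txor xorlA. Qed.
Lemma txorK u v : txor u (txor u v) = v.
Proof. by apply: val_inj; rewrite !val_txor xorlK // !size_tuple. Qed.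

Lemma swapQ u v : addb (sgQ u v) (cs (txor u v)) = addb (addb (cs u) (cs v)) (sgQ v u).
Proof. by rewrite /sgQ val_txor cmul_swap ?size_tuple. Qed.

Lemma qone_zero : all negb (val (qone n).2).
Proof. by apply/allP => b /= /mapP [i _ ->]. Qed.

Lemma xorl_zero u v : all negb u -> size u = size v -> xorl u v = v.
Proof.
elim: u v => [|a u IH] [|b v] //= /andP[/negbTE -> Hu] [] Hs.
by rewrite xorl_cons IH.
Qed.

Lemma qmul1x (x : Q n) : qmul (qone n) x = x.
Proof.
rewrite qmulE /sgQ; have [-> _] := cmul_zero n (val x.2) qone_zero.
case: x => s u /=; congr pair; first by rewrite addbF.
by apply: val_inj; rewrite val_txor xorl_zero ?size_tuple // qone_zero.
Qed.

Lemma qmulx1 (x : Q n) : qmul x (qone n) = x.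
Proof.
rewrite qmulE /sgQ; have [_ ->] := cmul_zero n (val x.2) qone_zero.
case: x => s u /=; congr pair; first by rewrite !addbF.
by apply: val_inj; rewrite val_txor xorlC xorl_zero ?size_tuple // qone_zero.
Qed.

Lemma qmulI (x : Q n) : injective (qmul x).
Proof.
move=> [a1 a2] [b1 b2]; rewrite !qmulE => H.
have Ht := congr1 snd H; have Hs := congr1 fst H; rewrite /= in Ht Hs.
have E : a2 = b2 by rewrite -(txorK x.2 a2) Ht txorK.
subst b2; congr pair; clear H; move: Hs; by case: a1; case: b1; case: (x.1); case: (sgQ _ _).
Qed.

Lemma qmulIr (x : Q n) : injective (fun a : Q n => qmul a x).
Proof.
move=> [a1 a2] [b1 b2]; rewrite /= !qmulE => H.
have Ht := congr1 snd H; have Hs := congr1 fst H; rewrite /= in Ht Hs.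
have E : a2 = b2 by rewrite -(txorK x.2 a2) (txorC x.2 a2) Ht (txorC b2) txorK.
subst b2; congr pair; clear H; move: Hs; by case: a1; case: b1; case: (x.1); case: (sgQ _ _).
Qed.

Lemma LpE (x a : Q n) : Lp x a = qmul x a.
Proof.
rewrite /Lp; case: pickP => [p /forallP H | H]; first exact/eqP.
move: (H (perm (@qmulI x))) => /negP []; apply/forallP => b; by rewrite permE.
Qed.

Lemma RpE (x a : Q n) : Rp x a = qmul a x.
Proof.
rewrite /Rp; case: pickP => [p /forallP H | H]; first exact/eqP.
move: (H (perm (@qmulIr x))) => /negP []; apply/forallP => b; by rewrite permE.
Qed.

End QL.


Ltac bgen := repeat match goal with
  | |- context [sgQ ?u ?v] => generalize (sgQ u v)
  | |- context [cs ?u] => generalize (cs u)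
  | |- context [@fst bool ?B ?p] => generalize (@fst bool B p)
  end;
  repeat (let b := fresh "b" in intro b; destruct b);
  repeat match goal with b : bool |- _ => destruct b end; reflexivity.

Lemma addb_move p q r : addb p q = r -> p = addb r q.
Proof. by case: p; case: q; case: r. Qed.

Section K.
Variable n : nat.

Lemma key (x1 y1 a1 : bool) (x2 y2 a2 : n.-tuple bool) :
  exists c : Q n,
  qmul ((y1, y2) : Q n) (qmul ((x1, x2) : Q n) ((a1, a2) : Q n)) =
     qmul (qmul ((y1, y2) : Q n) ((x1, x2) : Q n)) c /\
  qmul (qmul ((a1, a2) : Q n) ((x1, x2) : Q n)) ((y1, y2) : Q n) =
     qmul c (qmul ((x1, x2) : Q n) ((y1, y2) : Q n)).
Proof.
pose eps := addb (addb (addb (sgQ y2 x2) (sgQ (txor y2 x2) a2)) (sgQ x2 a2))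
   (sgQ y2 (txor x2 a2)).
exists (addb a1 eps, a2); split.
  rewrite !qmulE /=; congr pair; last by rewrite txorA.
  rewrite /eps; clear eps; bgen.
rewrite !qmulE /=; congr pair; last by rewrite txorA.
rewrite /eps; clear eps.
have S1 := addb_move (swapQ y2 x2).
have S2 := addb_move (swapQ (txor y2 x2) a2).
have S3 := addb_move (swapQ x2 a2).
have S4 := addb_move (swapQ y2 (txor x2 a2)).
rewrite S1 S2 S3 S4 (txorC x2 y2) (txorC a2 x2) txorA.
bgen.
Qed.

Lemma LxyRxy (x y : Q n) : Lxy x y = Rxy x y.
Proof.
apply/permP => a; rewrite /Lxy /Rxy !permM !LpE !RpE.
case: x => x1 x2; case: y => y1 y2; case: a => a1 a2.
have [c [E1 E2]] := key x1 y1 a1 x2 y2 a2.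
by rewrite E1 E2 -(LpE _ c) -(RpE _ c) !permK.
Qed.
End K.

Section GenPart.
Local Open Scope group_scope.

Lemma gen_coset (gT : finGroupType) (A Ls : {set gT}) (H : {group gT}) :
  1 \in Ls -> (forall a l, a \in A -> l \in Ls -> l * a \in H * Ls) ->
  <<A>> \subset H * Ls.
Proof.
move=> L1 HA.
pose X := (H * Ls)%g.
pose P := [set g | [forall y in X, y * g \in X]].
have gP : group_set P.
  apply/andP; split.
  - rewrite inE; apply/forall_inP => y Hy; by rewrite mulg1.
  - apply/subsetP => _ /mulsgP [g1 g2 H1 H2 ->]; rewrite inE; apply/forall_inP => y Hy.
    move: H1 H2; rewrite !inE => /forall_inP H1 /forall_inP H2.
    by rewrite mulgA; exact: H2 _ (H1 _ Hy).
have sAP : A \subset Group gP.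
  apply/subsetP => a Ha; rewrite inE; apply/forall_inP => y /mulsgP [h l Hh Hl ->].
  have /mulsgP [h' l' Hh' Hl' E] := HA a l Ha Hl.
  by rewrite -mulgA E mulgA; apply: mem_mulg => //; exact: groupM.
apply/subsetP => g Hg.
have : g \in Group gP by move: Hg; apply/subsetP; rewrite gen_subG.
rewrite inE => /forall_inP /(_ 1); rewrite mul1g; apply.
by rewrite -(mulg1 1) mem_mulg.
Qed.

Lemma fix_gen (T : finType) (x : T) (S : {set {perm T}}) :
  (forall s, s \in S -> s x = x) -> forall h, h \in <<S>> -> h x = x.
Proof.
move=> HS.
pose P := [set p : {perm T} | p x == x].
have gP : group_set P.
  apply/andP; split; first by rewrite inE perm1.
  apply/subsetP => _ /mulsgP [g1 g2 H1 H2 ->]; rewrite inE permM.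
  by move: H1 H2; rewrite !inE => /eqP -> /eqP ->.
have sSP : S \subset Group gP by apply/subsetP => s Hs; rewrite inE HS.
move=> h Hh; have : h \in Group gP by move: Hh; apply/subsetP; rewrite gen_subG.
by rewrite inE => /eqP.
Qed.

Section M.
Variable n : nat.

Lemma Lp1 : Lp (qone n) = 1.
Proof. by apply/permP => a; rewrite LpE qmul1x perm1. Qed.
Lemma Rp1 : Rp (qone n) = 1.
Proof. by apply/permP => a; rewrite RpE qmulx1 perm1. Qed.

Lemma Lxy_fix (x y : Q n) : Lxy x y (qone n) = qone n.
Proof.
rewrite /Lxy !permM !LpE qmulx1.
by rewrite -{2}(qmulx1 (qmul y x)) -(LpE (qmul y x) (qone n)) permK.
Qed.

Lemma Tp_fix (x : Q n) : Tp x (qone n) = qone n.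
Proof.
by rewrite /Tp permM RpE qmul1x -{2}(qmulx1 x) -(LpE x (qone n)) permK.
Qed.

Lemma RXY : [set Rxy x y | x : Q n, y : Q n] = [set Lxy x y | x : Q n, y : Q n].
Proof. by apply: eq_in_imset2 => x y _ _; rewrite LxyRxy. Qed.

Lemma Inn_lE : Inn_l n = <<[set Lxy x y | x : Q n, y : Q n]>>.
Proof.
apply/eqP; rewrite eqEsubset; apply/andP; split.
- apply/subsetP => g; rewrite inE => /andP [Hg /eqP Hfix].
  have Hc : <<[set Lp x | x : Q n]>> \subset
      <<[set Lxy x y | x : Q n, y : Q n]>> * [set Lp x | x : Q n].
    apply: gen_coset.
    + by apply/imsetP; exists (qone n); rewrite ?Lp1.
    + move=> a l /imsetP [x _ ->] /imsetP [z _ ->].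
      have -> : Lp z * Lp x = Lxy z x * Lp (qmul x z) by rewrite /Lxy mulgKV.
      by apply: mem_mulg; [apply: mem_gen; apply: imset2_f | apply: imset_f].
  have Hg' := subsetP Hc g Hg.
  case/mulsgP: Hg' => h l Hh Hl E.
  case/imsetP: Hl => z _ El; subst l.
  have hfix : h (qone n) = qone n.
    apply: (fix_gen _ Hh) => s /imset2P [x y _ _ ->]; exact: Lxy_fix.
  have Ez : z = qone n by rewrite -Hfix E permM hfix LpE qmulx1.
  by rewrite E Ez Lp1 mulg1.
- apply/subsetP => g Hg; rewrite inE; apply/andP; split.
  + move: Hg; apply/subsetP; rewrite gen_subG; apply/subsetP => _ /imset2P [x y _ _ ->].
    by rewrite /Lxy !groupM ?groupV // mem_gen // imset_f.
  + apply/eqP; apply: (fix_gen _ Hg) => s /imset2P [x y _ _ ->]; exact: Lxy_fix.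
Qed.

Lemma Inn_rE : Inn_r n = <<[set Lxy x y | x : Q n, y : Q n]>>.
Proof.
rewrite -RXY.
apply/eqP; rewrite eqEsubset; apply/andP; split.
- apply/subsetP => g; rewrite inE => /andP [Hg /eqP Hfix].
  have Hc : <<[set Rp x | x : Q n]>> \subset
      <<[set Rxy x y | x : Q n, y : Q n]>> * [set Rp x | x : Q n].
    apply: gen_coset.
    + by apply/imsetP; exists (qone n); rewrite ?Rp1.
    + move=> a l /imsetP [x _ ->] /imsetP [z _ ->].
      have -> : Rp z * Rp x = Rxy z x * Rp (qmul z x) by rewrite /Rxy mulgKV.
      by apply: mem_mulg; [apply: mem_gen; apply: imset2_f | apply: imset_f].
  have Hg' := subsetP Hc g Hg.
  case/mulsgP: Hg' => h l Hh Hl E.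
  case/imsetP: Hl => z _ El; subst l.
  have hfix : h (qone n) = qone n.
    apply: (fix_gen _ Hh) => s /imset2P [x y _ _ ->]; rewrite -LxyRxy; exact: Lxy_fix.
  have Ez : z = qone n by rewrite -Hfix E permM hfix RpE qmul1x.
  by rewrite E Ez Rp1 mulg1.
- apply/subsetP => g Hg; rewrite inE; apply/andP; split.
  + move: Hg; apply/subsetP; rewrite gen_subG; apply/subsetP => _ /imset2P [x y _ _ ->].
    by rewrite /Rxy !groupM ?groupV // mem_gen // imset_f.
  + apply/eqP; apply: (fix_gen _ Hg) => s /imset2P [x y _ _ ->].
    rewrite -LxyRxy; exact: Lxy_fix.
Qed.

Lemma InnE : Inn n = <<[set Tp x | x : Q n] :|: [set Lxy x y | x : Q n, y : Q n]>>.
Proof.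
set HS := [set Tp x | x : Q n] :|: [set Lxy x y | x : Q n, y : Q n].
have HSfix : forall s, s \in HS -> s (qone n) = qone n.
  move=> s; case/setUP => [/imsetP [x _ ->] | /imset2P [x y _ _ ->]].
  - exact: Tp_fix.
  - exact: Lxy_fix.
apply/eqP; rewrite eqEsubset; apply/andP; split.
- apply/subsetP => g; rewrite inE => /andP [Hg /eqP Hfix].
  have Hc : <<[set Lp x | x : Q n] :|: [set Rp x | x : Q n]>> \subset
      <<HS>> * [set Lp x | x : Q n].
    apply: gen_coset.
    + by apply/imsetP; exists (qone n); rewrite ?Lp1.
    + move=> a l /setUP [] /imsetP [x _ ->] /imsetP [z _ ->].
      * have -> : Lp z * Lp x = Lxy z x * Lp (qmul x z) by rewrite /Lxy mulgKV.
        apply: mem_mulg; last by apply: imset_f.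
        by apply: mem_gen; apply/setUP; right; apply: imset2_f.
      * have -> : Lp z * Rp x =
          (Tp z)^-1 * Lxy z x * Tp (qmul z x) * Lp (qmul z x).
          rewrite LxyRxy /Tp /Rxy invMg invgK.
          by rewrite !mulgA mulgKV mulgKV mulgKV.
        apply: mem_mulg; last by apply: imset_f.
        have G1 : forall p, p \in HS -> p \in <<HS>> by move=> p Hp; apply: mem_gen.
        by apply: groupM; [apply: groupM|]; rewrite ?groupV; apply: G1; apply/setUP;
          first [left; apply: imset_f | right; apply: imset2_f].
  have Hg' := subsetP Hc g Hg.
  case/mulsgP: Hg' => h l Hh Hl E.
  case/imsetP: Hl => z _ El; subst l.
  have hfix : h (qone n) = qone n by apply: (fix_gen _ Hh).
  have Ez : z = qone n by rewrite -Hfix E permM hfix LpE qmulx1.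
  by rewrite E Ez Lp1 mulg1.
- apply/subsetP => g Hg; rewrite inE; apply/andP; split.
  + move: Hg; apply/subsetP; rewrite gen_subG; apply/subsetP => s.
    case/setUP => [/imsetP [x _ ->] | /imset2P [x y _ _ ->]].
    * by rewrite /Tp groupM ?groupV // mem_gen // inE imset_f ?orbT.
    * by rewrite /Lxy !groupM ?groupV // mem_gen // inE imset_f.
  + by apply/eqP; apply: (fix_gen _ Hg).
Qed.
End M.
End GenPart.

Theorem mainTheorem12 (n : nat) :
  Inn_l n = Inn_r n /\
  Inn n = <<[set Tp x | x : Q n] :|: [set Lxy x y | x : Q n, y : Q n]>>%g.
Proof. split; [by rewrite Inn_lE Inn_rE | exact: InnE]. Qed.
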